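(* For every data instance $(A,u)\in\mathbb{R}^{n\times m}\times\mathbb{R}^m$, $\tau(A,u)\ge\bar\rho(A,u)$.
   Context: $\tau(A,u):=|z^*|$ with $z^*:=\max_{x\in\mathbb{R}^n}\min_{i}(u_i-a_i^\top x)$, where $a_i$ are the columns of $A$ (assumed of unit Euclidean norm, with $\{A\lambda:\lambda\ge0\}=\mathbb{R}^n$, so the max is attained). For data $d=(A,u)$ let $\mathcal{P}_d=\{x:A^\top x\le u\}$, $\mathcal{F}=\{d:\mathcal{P}_d\ne\emptyset\}$, $\mathcal{I}=\{d:\mathcal{P}_d=\emptyset\}$, with norm $\|(A,u)\|:=\max\{\|A\|_{1,2},\|u\|_\infty\}$, where $\|A\|_{1,2}=\max_{\|w\|_1=1}\|Aw\|_2$. Renegar's distance to ill-posedness: $\bar\rho(d):=\inf_{d+\Delta d\in\mathcal{I}}\|\Delta d\|$ if $d\in\mathcal{F}$, and $\bar\rho(d):=\inf_{d+\Delta d\in\mathcal{F}}\|\Delta d\|$ if $d\in\mathcal{I}$. *)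

(* Defs.v *)
(* Vectors in R^k are functions nat -> R
   (only indices < k matter); an n x m matrix is A : nat -> nat -> R with
   entry A i j (row i < n, column j < m); the column a_j is fun i => A i j. *)
From Stdlib Require Import Reals Lra ClassicalEpsilon.
Open Scope R_scope.

Fixpoint fsum (k : nat) (f : nat -> R) : R :=
  match k with O => 0 | S k' => fsum k' f + f k' end.

(* min_{0<=j<k} f j  (junk value 0 for k = 0) *)
Fixpoint fmin (k : nat) (f : nat -> R) : R :=
  match k with
  | O => 0
  | S O => f O
  | S k' => Rmin (fmin k' f) (f k')
  end.

(* max_{0<=j<k} f j  (junk value 0 for k = 0) *)
Fixpoint fmax (k : nat) (f : nat -> R) : R :=
  match k with
  | O => 0
  | S O => f O
  | S k' => Rmax (fmax k' f) (f k')
  end.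

(* least upper bound / greatest lower bound of a set of reals
   (chosen classically; meaningful when it exists) *)
Definition Rsup (S : R -> Prop) : R :=
  epsilon (inhabits 0) (fun s => is_lub S s).
Definition Rinf (S : R -> Prop) : R := - Rsup (fun y => S (- y)).

Definition dotc (n : nat) (A : nat -> nat -> R) (j : nat) (x : nat -> R) : R :=
  fsum n (fun i => A i j * x i).

Definition norm2 (n : nat) (v : nat -> R) : R := sqrt (fsum n (fun i => v i ^ 2)).
Definition norm1 (m : nat) (w : nat -> R) : R := fsum m (fun j => Rabs (w j)).
Definition norminf (m : nat) (u : nat -> R) : R := fmax m (fun j => Rabs (u j)).

Definition matvec (n m : nat) (A : nat -> nat -> R) (w : nat -> R) : nat -> R :=
  fun i => fsum m (fun j => A i j * w j).

Definition normA12 (n m : nat) (A : nat -> nat -> R) : R :=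
  Rsup (fun r => exists w : nat -> R, norm1 m w = 1 /\ r = norm2 n (matvec n m A w)).

Definition data_norm (n m : nat) (A : nat -> nat -> R) (u : nat -> R) : R :=
  Rmax (normA12 n m A) (norminf m u).

Definition feasible (n m : nat) (A : nat -> nat -> R) (u : nat -> R) : Prop :=
  exists x : nat -> R, forall j, (j < m)%nat -> dotc n A j x <= u j.

Definition rho_bar (n m : nat) (A : nat -> nat -> R) (u : nat -> R) : R :=
  if excluded_middle_informative (feasible n m A u) then
    Rinf (fun r => exists (dA : nat -> nat -> R) (du : nat -> R),
            ~ feasible n m (fun i j => A i j + dA i j) (fun j => u j + du j)
            /\ r = data_norm n m dA du)
  else
    Rinf (fun r => exists (dA : nat -> nat -> R) (du : nat -> R),
            feasible n m (fun i j => A i j + dA i j) (fun j => u j + du j)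
            /\ r = data_norm n m dA du).

Definition zstar (n m : nat) (A : nat -> nat -> R) (u : nat -> R) : R :=
  Rsup (fun z => exists x : nat -> R, z = fmin m (fun j => u j - dotc n A j x)).

Definition tau (n m : nat) (A : nat -> nat -> R) (u : nat -> R) : R :=
  Rabs (zstar n m A u).

(* Main.v *)
Require Import Defs.
From Stdlib Require Import Reals Lra Lia ClassicalEpsilon Classical FunctionalExtensionality.
Open Scope R_scope.

Lemma fsum_ext k f g : (forall i, (i < k)%nat -> f i = g i) -> fsum k f = fsum k g.
Proof. induction k; simpl; intros H; [reflexivity|]. rewrite IHk by (intros; apply H; lia).
  rewrite H by lia. reflexivity. Qed.

Lemma fsum_plus k f g : fsum k (fun i => f i + g i) = fsum k f + fsum k g.
Proof. induction k; simpl; [ring|]. rewrite IHk. ring. Qed.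

Lemma fsum_scal k c f : fsum k (fun i => c * f i) = c * fsum k f.
Proof. induction k; simpl; [ring|]. rewrite IHk. ring. Qed.

Lemma fsum_opp k f : fsum k (fun i => - f i) = - fsum k f.
Proof. induction k; simpl; [ring|]. rewrite IHk. ring. Qed.

Lemma fsum_le k f g : (forall i, (i < k)%nat -> f i <= g i) -> fsum k f <= fsum k g.
Proof. induction k; simpl; intros H; [lra|].
  assert (fsum k f <= fsum k g) by (apply IHk; intros; apply H; lia).
  assert (f k <= g k) by (apply H; lia). lra. Qed.

Lemma fsum_zero k : fsum k (fun _ => 0) = 0.
Proof. induction k; simpl; [ring|]. rewrite IHk. ring. Qed.

Lemma fsum_swap n m (f : nat -> nat -> R) :
  fsum m (fun j => fsum n (fun i => f i j)) = fsum n (fun i => fsum m (fun j => f i j)).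
Proof. induction m; simpl.
  - symmetry. apply fsum_zero.
  - rewrite IHm. rewrite <- fsum_plus. reflexivity. Qed.

Lemma fmin_le k f j : (j < S k)%nat -> fmin (S k) f <= f j.
Proof. revert j. induction k; intros j Hj.
  - assert (j = 0)%nat by lia. subst. simpl. lra.
  - change (fmin (S (S k)) f) with (Rmin (fmin (S k) f) (f (S k))).
    destruct (Nat.eq_dec j (S k)).
    + subst. apply Rmin_r.
    + eapply Rle_trans; [apply Rmin_l|]. apply IHk. lia. Qed.

Lemma fmin_ge k f c : (forall j, (j < S k)%nat -> c <= f j) -> c <= fmin (S k) f.
Proof. induction k; intros H.
  - simpl. apply H. lia.
  - change (fmin (S (S k)) f) with (Rmin (fmin (S k) f) (f (S k))).
    apply Rmin_glb; [apply IHk; intros; apply H; lia| apply H; lia]. Qed.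

Lemma fmax_ge k f j : (j < S k)%nat -> f j <= fmax (S k) f.
Proof. revert j. induction k; intros j Hj.
  - assert (j = 0)%nat by lia. subst. simpl. lra.
  - change (fmax (S (S k)) f) with (Rmax (fmax (S k) f) (f (S k))).
    destruct (Nat.eq_dec j (S k)).
    + subst. apply Rmax_r.
    + eapply Rle_trans; [|apply Rmax_l]. apply IHk. lia. Qed.

Lemma fmax_le k f c : (forall j, (j < S k)%nat -> f j <= c) -> fmax (S k) f <= c.
Proof. induction k; intros H.
  - simpl. apply H. lia.
  - change (fmax (S (S k)) f) with (Rmax (fmax (S k) f) (f (S k))).
    apply Rmax_lub; [apply IHk; intros; apply H; lia| apply H; lia]. Qed.

Lemma Rsup_spec (S : R -> Prop) : bound S -> (exists x, S x) -> is_lub S (Rsup S).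
Proof. intros Hb He. unfold Rsup. apply epsilon_spec.
  destruct (completeness S Hb He) as [s Hs]. exists s; exact Hs. Qed.

Lemma Rinf_le (S : R -> Prop) r : (forall y, S y -> 0 <= y) -> S r -> Rinf S <= r.
Proof. intros H0 Hr. unfold Rinf.
  assert (HL : is_lub (fun y => S (- y)) (Rsup (fun y => S (- y)))).
  { apply Rsup_spec.
    - exists 0. intros y Hy. apply H0 in Hy. lra.
    - exists (- r). rewrite Ropp_involutive. exact Hr. }
  destruct HL as [HU _]. assert (- r <= Rsup (fun y => S (- y))).
  { apply HU. rewrite Ropp_involutive. exact Hr. } lra. Qed.

Lemma close_eps a b : (forall eps, 0 < eps -> a <= b + eps) -> a <= b.
Proof. intros H. destruct (Rle_dec a b); [assumption|].
  specialize (H ((a - b)/2)). lra. Qed.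

Lemma data_norm_nonneg n m dA du : data_norm n (S m) dA du >= 0.
Proof. unfold data_norm, norminf.
  assert (Rabs (du 0%nat) <= fmax (S m) (fun j => Rabs (du j))) by (apply (fmax_ge m (fun j => Rabs (du j)) 0); lia).
  pose proof (Rabs_pos (du 0%nat)). pose proof (Rmax_r (normA12 n (S m) dA) (fmax (S m) (fun j => Rabs (du j)))). lra. Qed.

Lemma norm1_w0 m : norm1 (S m) (fun j : nat => if Nat.eqb j 0 then 1 else 0) = 1.
Proof. unfold norm1. induction m.
  - simpl. rewrite Rabs_R1. ring.
  - change (fsum (S (S m)) (fun j => Rabs (if Nat.eqb j 0 then 1 else 0))) with
      (fsum (S m) (fun j => Rabs (if Nat.eqb j 0 then 1 else 0)) + Rabs (if Nat.eqb (S m) 0 then 1 else 0)).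
    rewrite IHm. simpl. rewrite Rabs_R0. ring. Qed.

Lemma normA12_zero n m : normA12 n (S m) (fun _ _ => 0) = 0.
Proof. unfold normA12.
  set (S0 := fun r => exists w : nat -> R, norm1 (S m) w = 1 /\ r = norm2 n (matvec n (S m) (fun _ _ => 0) w)).
  assert (Hz : forall w, norm2 n (matvec n (S m) (fun _ _ => 0) w) = 0).
  { intros w. unfold norm2, matvec.
    rewrite (fsum_ext n _ (fun _ => 0)). rewrite fsum_zero. apply sqrt_0.
    intros i _. rewrite (fsum_ext (S m) _ (fun _ => 0)). rewrite fsum_zero. ring.
    intros; ring. }
  set (w0 := fun j : nat => if Nat.eqb j 0 then 1 else 0).
  assert (Hw : norm1 (S m) w0 = 1) by apply norm1_w0.
  assert (HL : is_lub S0 (Rsup S0)).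
  { apply Rsup_spec.
    - exists 0. intros y [w [_ ->]]. rewrite Hz. lra.
    - exists 0. exists w0. split; [exact Hw| rewrite Hz; reflexivity]. }
  destruct HL as [HU HM].
  assert (0 <= Rsup S0) by (apply HU; exists w0; split; [exact Hw| rewrite Hz; reflexivity]).
  assert (Rsup S0 <= 0) by (apply HM; intros y [w [_ ->]]; rewrite Hz; lra).
  lra. Qed.

Lemma data_norm_const n m c :
  data_norm n (S m) (fun _ _ => 0) (fun _ => c) <= Rabs c.
Proof. unfold data_norm. rewrite normA12_zero. apply Rmax_lub; [apply Rabs_pos|].
  unfold norminf. apply fmax_le. intros. lra. Qed.

Lemma dotc_swap n m A lam x :
  fsum m (fun j => lam j * dotc n A j x) = fsum n (fun i => x i * matvec n m A lam i).
Proof. unfold dotc, matvec.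
  transitivity (fsum m (fun j => fsum n (fun i => lam j * (A i j * x i)))).
  { apply fsum_ext; intros. rewrite fsum_scal. reflexivity. }
  rewrite fsum_swap. apply fsum_ext; intros. rewrite <- fsum_scal.
  apply fsum_ext; intros. ring. Qed.

Theorem mainTheorem15 (n m : nat) (A : nat -> nat -> R) (u : nat -> R)
  (Hn : (0 < n)%nat)
  (Hunit : forall j, (j < m)%nat -> norm2 n (fun i => A i j) = 1)
  (Hspan : forall y : nat -> R, exists lam : nat -> R,
      (forall j, (j < m)%nat -> 0 <= lam j) /\
      (forall i, (i < n)%nat -> matvec n m A lam i = y i)) :
  tau n m A u >= rho_bar n m A u.
Proof.
  destruct m as [|m].
  { destruct (Hspan (fun _ => 1)) as [lam [_ H]]. specialize (H 0%nat Hn).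
    unfold matvec in H. simpl in H. lra. }
  set (Zs := fun z => exists x : nat -> R, z = fmin (S m) (fun j => u j - dotc n A j x)).
  destruct (Hspan (fun i => - A i 0%nat)) as [lam0 [Hl0 Hm0]].
  set (K := Rabs (fsum (S m) (fun j => lam0 j * u j)) + Rabs (u 0%nat)).
  assert (Hbd : forall x, fmin (S m) (fun j => u j - dotc n A j x) <= K).
  { intros x. set (F := fmin (S m) (fun j => u j - dotc n A j x)).
    assert (H1 : forall j, (j < S m)%nat -> F <= u j - dotc n A j x)
      by (intros; apply (fmin_le m (fun j => u j - dotc n A j x)); assumption).
    assert (H2 : fsum (S m) (fun j => lam0 j * F) <= fsum (S m) (fun j => lam0 j * u j + - (lam0 j * dotc n A j x))).
    { apply fsum_le. intros j Hj. specialize (H1 j Hj). specialize (Hl0 j Hj).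
      assert (lam0 j * F <= lam0 j * (u j - dotc n A j x)) by (apply Rmult_le_compat_l; lra). lra. }
    rewrite fsum_plus, fsum_opp, dotc_swap in H2. rewrite (fsum_scal (S m) F lam0) in H2 || (replace (fsum (S m) (fun j => lam0 j * F)) with (F * fsum (S m) lam0) in H2 by (rewrite <- fsum_scal; apply fsum_ext; intros; ring)).
    assert (H3 : fsum n (fun i => x i * matvec n (S m) A lam0 i) = - dotc n A 0 x).
    { unfold dotc. rewrite <- fsum_opp. apply fsum_ext. intros i Hi. rewrite Hm0 by exact Hi. ring. }
    rewrite H3 in H2.
    assert (HL : 0 <= fsum (S m) lam0).
    { rewrite <- (fsum_zero (S m)). apply fsum_le. exact Hl0. }
    assert (H4 : F <= u 0%nat - dotc n A 0 x) by (apply H1; lia).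
    pose proof (Rle_abs (fsum (S m) (fun j => lam0 j * u j))).
    pose proof (Rle_abs (u 0%nat)).
    pose proof (Rabs_pos (fsum (S m) (fun j => lam0 j * u j))).
    pose proof (Rabs_pos (u 0%nat)).
    unfold K. destruct (Rle_dec F 0); [lra|]. nra. }
  assert (HZ : is_lub Zs (zstar n (S m) A u)).
  { apply Rsup_spec.
    - exists K. intros z [x ->]. apply Hbd.
    - exists (fmin (S m) (fun j => u j - dotc n A j (fun _ => 0))). exists (fun _ => 0). reflexivity. }
  destruct HZ as [HU HM].
  set (z := zstar n (S m) A u) in *.
  assert (Hdot0 : forall j x, dotc n (fun i j => A i j + 0) j x = dotc n A j x).
  { intros. replace (fun i j => A i j + 0) with A. reflexivity.
    extensionality i. extensionality k. ring. }
  unfold tau. fold z. unfold rho_bar.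
  destruct (excluded_middle_informative (feasible n (S m) A u)) as [Hf|Hf].
  - destruct Hf as [x0 Hx0].
    assert (Hz0 : 0 <= z).
    { apply Rle_trans with (fmin (S m) (fun j => u j - dotc n A j x0)); [|apply HU; exists x0; reflexivity].
      apply fmin_ge. intros j Hj. specialize (Hx0 j Hj). lra. }
    rewrite Rabs_right by lra. apply Rle_ge. apply close_eps. intros eps He.
    eapply Rle_trans; [apply Rinf_le|].
    + intros y [dA [du [_ ->]]]. apply Rge_le, data_norm_nonneg.
    + exists (fun _ _ => 0), (fun _ => - (z + eps)). split; [|reflexivity].
      intros [x Hx]. assert (Hc : z + eps <= fmin (S m) (fun j => u j - dotc n A j x)).
      { apply fmin_ge. intros j Hj. specialize (Hx j Hj). rewrite Hdot0 in Hx. lra. }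
      assert (fmin (S m) (fun j => u j - dotc n A j x) <= z) by (apply HU; exists x; reflexivity).
      lra.
    + eapply Rle_trans; [apply (data_norm_const n m (- (z + eps)))|].
      rewrite Rabs_Ropp, Rabs_right; lra.
  - assert (Hneg : forall x, fmin (S m) (fun j => u j - dotc n A j x) < 0).
    { intros x. destruct (Rlt_dec (fmin (S m) (fun j => u j - dotc n A j x)) 0) as [h|h]; [exact h|].
      exfalso. apply Hf. exists x. intros j Hj.
      pose proof (fmin_le m (fun j => u j - dotc n A j x) j Hj). simpl in *. lra. }
    assert (Hz0 : z <= 0). { apply HM. intros y [x ->]. left. apply Hneg. }
    rewrite Rabs_left1 by lra. apply Rle_ge. apply close_eps. intros eps He.
    assert (Hex : exists x, z - eps < fmin (S m) (fun j => u j - dotc n A j x)).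
    { apply NNPP. intros Hn'. assert (z <= z - eps); [|lra].
      apply HM. intros y [x ->]. apply Rnot_lt_le. intros h. apply Hn'. exists x. exact h. }
    destruct Hex as [x Hx].
    eapply Rle_trans; [apply Rinf_le|].
    + intros y [dA [du [_ ->]]]. apply Rge_le, data_norm_nonneg.
    + exists (fun _ _ => 0), (fun _ => - z + eps). split; [|reflexivity].
      exists x. intros j Hj. rewrite Hdot0.
      pose proof (fmin_le m (fun j => u j - dotc n A j x) j Hj). simpl in *. lra.
    + eapply Rle_trans; [apply (data_norm_const n m (- z + eps))|].
      rewrite Rabs_right; lra.
Qed.
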